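(* For each $p>1$ let $u_p\in K_p$ be a nonnegative function with $Q(u_p)=J_p$. Then $$\gamma_p:=\Big(|A|^{-1}\int_A u_p^{p+1}\Big)^{\frac1{p+1}}\to 1\quad\text{as }p\to\infty,$$ where $A=B_{R_2}\setminus B_{R_1}$.
   Context: Let $n\ge2$, $B_1\subset\mathbb{R}^n$ the open unit ball, $B_R$ the ball of radius $R$ centered at the origin, and $V(|x|)\ge0$, $V\not\equiv0$, a smooth radial function on $B_1$. Let $G$ be the Neumann Green function: for $s\in(0,1)$, $-\partial_r^2G(r,s)-\frac{n-1}{r}\partial_rG(r,s)+V(r)G(r,s)=\delta_s$ in distributions on $(0,1)$ (Dirac mass w.r.t. $dr$), $\partial_rG(0,s)=\partial_rG(1,s)=0$. Let $F(r)=|\partial B_1|\,r^{n-1}/G(r,r)$. Let $\bar r\in(0,1)$ be a local minimum point of $F$, and fix $0<R_1<\bar r<R_2<1$ such that $\bar r$ is a global minimum point of $F$ on $[R_1,R_2]$; fix $c$ with $\max\{G(R_1,\bar r)/G(\bar r,\bar r),\,G(R_2,\bar r)/G(\bar r,\bar r)\}<c<1$. Let $H^1_r(B_1)=\{u\in H^1(B_1): u \text{ radial}\}$, $Q(u)=\int_{B_1}(|\nabla u|^2+V(|x|)u^2)$, and for $p>1$ $$K_p=\Big\{u\in H^1_r(B_1):\ \Big(|B_1|^{-1}\int_{B_1}|u|^{p+1}\Big)^{\frac1{p+1}}=1,\ |u|\le c \text{ in } B_{R_1}\cup(B_1\setminus B_{R_2})\Big\},\qquad J_p=\inf\{Q(u):u\in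 K_p\}.$$ *)

(* Defs.v *)
From HB Require Import structures.
From mathcomp Require Import all_boot all_order all_algebra.
From mathcomp Require Import all_classical all_reals all_analysis.
Set Implicit Arguments. Unset Strict Implicit. Unset Printing Implicit Defensive.
Import Order.TTheory GRing.Theory Num.Theory.
Import numFieldNormedType.Exports.
Local Open Scope classical_set_scope.
Local Open Scope ring_scope.

(* Radial functions on B_1 subset R^n are represented by their profile
   u : R -> R (u(x) = u(|x|)); only the values on ]0,1[ matter.
   Integrals of radial functions over balls/annuli are computed in polar
   coordinates: \int_{B_1} f(|x|) dx = |dB_1| \int_0^1 f(r) r^(n-1) dr. *)

Section Defs.
Context {R : realType}.
Notation mu := (@lebesgue_measure R).

(* |S^(n-1)| = |dB_1| in R^n : w_1 = 2, w_2 = 2 pi, w_(k+2) = 2 pi w_k / k *)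
Fixpoint sphere_area (n : nat) : R :=
  match n with
  | 0%N => 0
  | 1%N => 2
  | 2%N => 2 * pi
  | k.+2 => 2 * pi / k%:R * sphere_area k
  end.

Definition ball_volume (n : nat) : R := sphere_area n / n%:R.

(* x |-> V(|x|) is smooth on B_1 : the even extension of the profile is C^oo
   on ]-1,1[. *)
Definition smooth_radial_profile (V : R -> R) : Prop :=
  (forall r, V (- r) = V r) /\
  (forall k : nat, forall r, -1 < r < 1 -> derivable (derive1n k V) r 1).

(* G is the Neumann Green function of -d^2/dr^2 - (n-1)/r d/dr + V on (0,1):
   for every pole s in (0,1), g := G(.,s) is a classical solution on (0,s) and
   (s,1), continuous at s, with the jump g'(s-) - g'(s+) = 1 (i.e. -g'' has a
   Dirac mass at s), and g'(0) = g'(1) = 0 (as one-sided limits). *)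
Definition neumann_green (n : nat) (V : R -> R) (G : R -> R -> R) : Prop :=
  forall s, 0 < s < 1 ->
  let g := fun r => G r s in
  (forall r, 0 < r < 1 -> r != s ->
     derivable g r 1 /\ derivable (derive1 g) r 1 /\
     - (derive1n 2 g) r - (n.-1)%:R / r * derive1 g r + V r * g r = 0) /\
  {for s, continuous g} /\
  (exists a b : R,
     derive1 g x @[x --> s^'-] --> a /\ derive1 g x @[x --> s^'+] --> b /\ a - b = 1) /\
  derive1 g x @[x --> 0^'+] --> 0 /\
  derive1 g x @[x --> 1^'-] --> 0.

Definition Ffun (n : nat) (G : R -> R -> R) (r : R) : R :=
  sphere_area n * r ^+ n.-1 / G r r.

(* H^1_r(B_1): profile locally absolutely continuous on ]0,1[ (FTC holds with
   its a.e. derivative derive1 u) and \int_{B_1} (|grad u|^2 + u^2) < oo. *)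
Definition H1r (n : nat) (u : R -> R) : Prop :=
  (forall a b, 0 < a -> a < b -> b < 1 ->
     mu.-integrable `[a, b] (fun r => (derive1 u r)%:E) /\
     ((u b - u a)%:E = \int[mu]_(r in `[a, b]) (derive1 u r)%:E)%E) /\
  mu.-integrable `]0, 1[
    (fun r => ((derive1 u r ^+ 2 + u r ^+ 2) * r ^+ n.-1)%:E).

(* Q(u) = \int_{B_1} |grad u|^2 + V u^2 *)
Definition Qform (n : nat) (V : R -> R) (u : R -> R) : \bar R :=
  ((sphere_area n)%:E *
   \int[mu]_(r in `]0%R, 1%R[) (((derive1 u r) ^+ 2 + V r * u r ^+ 2) * r ^+ n.-1)%:E)%E.

Definition Lp1_mean (n : nat) (p : R) (u : R -> R) : \bar R :=
  (((ball_volume n)^-1 * sphere_area n)%:E *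
   \int[mu]_(r in `]0%R, 1%R[) ((`|u r| `^ (p + 1)) * r ^+ n.-1)%R%:E)%E
  `^ (p + 1)^-1.

Definition Kset (n : nat) (R1 R2 c p : R) : set (R -> R) :=
  [set u | H1r n u /\ Lp1_mean n p u = 1%E :> \bar R /\
     (forall r, 0 < r < 1 -> (r < R1 \/ R2 <= r) -> `|u r| <= c)].

Definition Jval (n : nat) (V : R -> R) (R1 R2 c p : R) : \bar R :=
  ereal_inf [set Qform n V u | u in Kset n R1 R2 c p].

Definition annulus_volume (n : nat) (R1 R2 : R) : R :=
  ball_volume n * (R2 ^+ n - R1 ^+ n).

Definition gamma_p (n : nat) (R1 R2 p : R) (u : R -> R) : R :=
  ((annulus_volume n R1 R2)^-1 * sphere_area n *
   Rintegral mu `[R1, R2[ (fun r => u r `^ (p + 1) * r ^+ n.-1)) `^ (p + 1)^-1.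

End Defs.

(* Main.v *)
Require Import Defs.
From HB Require Import structures.
From mathcomp Require Import all_boot all_order all_algebra.
From mathcomp Require Import all_classical all_reals all_analysis.
From mathcomp Require Import measurable_realfun.
From mathcomp Require Import ring lra.
Import Order.TTheory GRing.Theory Num.Theory.
Import numFieldNormedType.Exports.
Local Open Scope classical_set_scope.
Local Open Scope ring_scope.
Lemma H1r_cont (R : realType) n (u : R -> R) : H1r n u ->
  {in `]0, 1[, continuous u}.
Proof.
move=> [H _] x; rewrite in_itv /= => /andP[x0 x1].
set a := x / 2; set b := (x + 1) / 2.
have a0 : 0 < a by rewrite /a divr_gt0.
have ax : a < x by rewrite /a ltr_pdivrMr // mulr2n mulrDr mulr1 ltrDr.
have xb : x < b by rewrite /b ltr_pdivlMr // mulrDr mulr1 ltrD2l.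
have b1 : b < 1 by rewrite /b ltr_pdivrMr // mul1r ltrD2r.
have ab : a < b by exact: lt_trans ax xb.
have [hi _] := H a b a0 ab b1.
set F := fun t => parameterized_integral (@lebesgue_measure R) a t (derive1 u).
have cF : {within `[a, b], continuous F}.
  exact: (parameterized_integral_continuous (ltW ab) hi).
have cFx : {for x, continuous F}.
  by apply: (within_continuous_continuous ab cF); rewrite in_itv /= ax xb.
have ex : u x = u a + F x.
  have [_ e] := H a x a0 ax (lt_trans xb b1).
  by rewrite /F /parameterized_integral /Rintegral -e /= addrC subrK.
rewrite /continuous_at ex.
have cG : (fun t => u a + F t) @ x --> u a + F x.
  by apply: cvgD; [exact: cvg_cst | exact: cFx].
apply: cvg_trans cG; apply: near_eq_cvg.
have := @near_in_itvoo R a b x.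
rewrite in_itv /= ax xb => /(_ isT) hn.
near=> t.
have : t \in `]a, b[ by near: t.
rewrite in_itv /= => /andP[aT tb].
have [_ e] := H a t a0 aT (lt_trans tb b1).
by rewrite /F /parameterized_integral /Rintegral -e /= addrC subrK.
Unshelve. all: by end_near. Qed.

Lemma sphere_area_gt0 (R : realType) n : (0 < n)%N -> 0 < @sphere_area R n.
Proof.
elim/ltn_ind: n => -[|[|[|k]]] IH // _.
- by rewrite /=; apply: mulr_gt0; [lra|exact: pi_gt0].
- have -> : @sphere_area R k.+3 = 2 * pi / k.+1%:R * sphere_area k.+1 by [].
  by rewrite !mulr_gt0 ?pi_gt0 ?invr_gt0 ?ltr0n // IH // ltnS ltnW.
Qed.

Lemma key (R : realType) n (u : R -> R) (p R1 R2 c : R) :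
  (2 <= n)%N -> 0 < R1 -> R1 < R2 -> R2 < 1 -> 0 < p ->
  H1r n u -> Lp1_mean n p u = 1%E ->
  (forall r, 0 < r < 1 -> (r < R1 \/ R2 <= r) -> `|u r| <= c) ->
  (forall r, 0 < r < 1 -> 0 <= u r) ->
  0 <= c /\
  exists IA : R, gamma_p n R1 R2 p u =
     (n%:R * IA / (R2 ^+ n - R1 ^+ n)) `^ (p + 1)^-1
     /\ n%:R^-1 - c `^ (p + 1) <= IA <= n%:R^-1.
Proof.
move=> n2 R10 R12 R21 p0 hu hL hc hpos.
have c0 : 0 <= c.
  apply: le_trans (normr_ge0 _) (hc (R1 / 2) _ _).
    by apply/andP; split; lra.
  by left; lra.
split => //.
set f := fun r => `|u r| `^ (p + 1) * r ^+ n.-1.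
have f0 : forall r, 0 < r -> 0 <= f r.
  by move=> r r0; rewrite /f mulr_ge0 ?powR_ge0 ?exprn_ge0 ?ltW.
have mu_ : measurable_fun (`]0, 1[ : set R) u.
  apply: open_continuous_measurable_fun; first exact: interval_open.
  by move=> x; rewrite inE /= => xi; exact: (@H1r_cont _ _ _ hu x xi).
have mf : measurable_fun (`]0, 1[ : set R) f.
  apply: measurable_funM.
    apply: (measurableT_comp (measurable_powR _)).
    by apply: measurableT_comp => //; exact: normr_measurable.
  exact: measurable_funX.
have mfE : measurable_fun (`]0, 1[ : set R) (fun r => (f r)%:E).
  exact/measurable_EFinP.
have w0 : 0 < @sphere_area R n by apply: sphere_area_gt0; exact: ltnW.
have n0 : 0 < n%:R :> R by rewrite ltr0n; exact: ltnW.
set I := (\int[lebesgue_measure]_(r in `]0%R, 1%R[) (f r)%:E)%E.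
have I0 : (0 <= I)%E.
  apply: integral_ge0 => r; rewrite /= in_itv /= => /andP[r0 _].
  by rewrite lee_fin f0.
have X1 : (n%:R%:E * I = 1)%E.
  have Xge0 : (0 <= n%:R%:E * I)%E by rewrite mule_ge0 // lee_fin ltW.
  have p1 : p + 1 != 0 by rewrite gt_eqF // addr_gt0.
  have kE : (ball_volume n)^-1 * sphere_area n = n%:R :> R.
    by rewrite /ball_volume invf_div divfK // gt_eqF.
  have hL' : ((n%:R%:E * I) `^ (p + 1)^-1 = 1)%E by rewrite -hL /Lp1_mean kE.
  transitivity ((n%:R%:E * I) `^ ((p+1)^-1 * (p+1)))%E.
    by rewrite mulVf // poweRe1.
  by rewrite poweRrM hL' poweR1r.
have IE : I = (n%:R^-1)%:E.
  move: X1 I0; case: I => [r| |] //.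
  - move=> /eqP; rewrite -EFinM eqe => /eqP h _; congr EFin.
    apply: (mulfI (lt0r_neq0 n0)); by rewrite h mulfV // lt0r_neq0.
  - by rewrite gt0_muley // lte_fin.
have OA : [set` `[R1, R2[] `<=` [set` `]0%R, 1%R[].
  move=> x /=; rewrite !in_itv /= => /andP[h1 h2]; apply/andP; split; lra.
set A := [set` `[R1, R2[].
set B := [set` `]0%R, 1%R[] `\` A.
have mA : measurable A by exact: measurable_itv.
have mB : measurable B by apply: measurableD; exact: measurable_itv.
have split_ : I = (\int[lebesgue_measure]_(r in A) (f r)%:E +
                   \int[lebesgue_measure]_(r in B) (f r)%:E)%E.
  rewrite /I -(setDUK OA) ge0_integral_setU //.
  - by rewrite setDUK.
  - move=> r; rewrite setDUK // /= in_itv /= => /andP[r0 _].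
    by rewrite lee_fin f0.
  - by rewrite disj_set2E setDIK.
set IAe := (\int[lebesgue_measure]_(r in A) (f r)%:E)%E.
set IBe := (\int[lebesgue_measure]_(r in B) (f r)%:E)%E.
have IA0 : (0 <= IAe)%E.
  apply: integral_ge0 => r; rewrite /A /= in_itv /= => /andP[r0 _].
  by rewrite lee_fin f0 //; lra.
have IB0 : (0 <= IBe)%E.
  apply: integral_ge0 => r [] /=; rewrite in_itv /= => /andP[r0 _] _.
  by rewrite lee_fin f0.
have IAle : (IAe <= (n%:R^-1)%:E)%E by rewrite -IE split_ leeDl.
have IBle : (IBe <= (n%:R^-1)%:E)%E by rewrite -IE split_ leeDr.
have IAf : IAe \is a fin_num.
  by rewrite ge0_fin_numE // (le_lt_trans IAle) // ltry.
have IBf : IBe \is a fin_num.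
  by rewrite ge0_fin_numE // (le_lt_trans IBle) // ltry.
have IBc : (IBe <= (c `^ (p + 1))%:E)%E.
  apply: (@le_trans _ _ (\int[lebesgue_measure]_(r in B) (cst (c `^ (p + 1))%:E) r)%E).
    apply: ge0_le_integral => //.
    - move=> r [] /=; rewrite in_itv /= => /andP[r0 _] _.
      by rewrite lee_fin f0.
    - apply: (measurable_funS _ _ mfE); [exact: measurable_itv | by move=> r []].

    - move=> r [] /=; rewrite !in_itv /= => /andP[r0 r1] nA.
      have hr : r < R1 \/ R2 <= r.
        case: (ltP r R1) => [|h1]; first by left.
        right; case: (leP R2 r) => // h2; exfalso; apply: nA.
        by rewrite /A /= in_itv /= h1 h2.
      have := hc r (ltac:(by rewrite r0 r1)) hr => hur.
      rewrite lee_fin /f -[X in _ <= X]mulr1.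
      apply: ler_pM.
      - exact: powR_ge0.
      - by apply: exprn_ge0; lra.
      - by apply: (@ge0_ler_powR R (p + 1)); rewrite ?nnegrE ?normr_ge0 //; lra.
      - by apply: exprn_ile1; lra.
  rewrite integral_cst // -[X in (_ <= X)%E]mule1.
  apply: lee_wpmul2l; first by rewrite lee_fin powR_ge0.
  apply: (@le_trans _ _ (lebesgue_measure [set` `]0%R, 1%R[])).
    apply: le_measure; rewrite ?inE; [exact: mB | exact: measurable_itv | ].
    by move=> r [].
  by rewrite lebesgue_measure_itv /= lte_fin ltr01 oppr0 adde0.
exists (fine IAe).
have eA : IAe = (fine IAe)%:E by rewrite fineK.
have eB : IBe = (fine IBe)%:E by rewrite fineK.
have hsum : n%:R^-1 = fine IAe + fine IBe.
  by apply/eqP; rewrite -eqe EFinD -eA -eB -IE split_.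
have hB : fine IBe <= c `^ (p + 1) by rewrite -lee_fin -eB.
have hA : fine IAe <= n%:R^-1 by rewrite -lee_fin -eA.
split; last by apply/andP; split => //; rewrite hsum; lra.
have hD : 0 < R2 ^+ n - R1 ^+ n.
  by rewrite subr_gt0 ltrXn2r //; [rewrite -lt0n; exact: ltnW | lra].
rewrite /gamma_p.
have -> : Rintegral lebesgue_measure [set` `[R1, R2[]
    (fun r => u r `^ (p + 1) * r ^+ n.-1) = fine IAe.
  rewrite /Rintegral /IAe; congr fine; apply: eq_integral => r.
  rewrite inE /= in_itv /= => /andP[h1 h2].
  rewrite /f ger0_norm //; apply: hpos; apply/andP; split; lra.
congr (_ `^ _).
rewrite /annulus_volume /ball_volume.
field.
by rewrite !lt0r_neq0.
Qed.
Lemma inv_lim (R : realType) : (fun p : R => (p + 1)^-1) @ +oo --> (0 : R).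
Proof.
apply/(@gtr0_cvgV0 _ _ _ _ (fun p : R => p + 1)); last exact: cvg_addrr.
by near=> p; near: p; exists 0; split => // x h; lra.
Unshelve. all: by end_near. Qed.

Lemma powK_lim (R : realType) (K : R) : 0 < K ->
  (fun p : R => K `^ (p + 1)^-1) @ +oo --> (1 : R).
Proof.
move=> K0.
have e : forall p, K `^ (p + 1)^-1 = expR ((p + 1)^-1 * ln K).
  by move=> p; rewrite /powR gt_eqF.
have h1 : (fun p : R => (p + 1)^-1 * ln K) @ +oo --> 0 * ln K.
  by apply: cvgMr_tmp; exact: inv_lim.
have := cvg_comp _ _ h1 (@continuous_expR R (0 * ln K)).
by rewrite mul0r expR0 (funext e).
Qed.

Lemma cpow_lim (R : realType) (c : R) : 0 <= c < 1 ->
  (fun p : R => c `^ (p + 1)) @ +oo --> (0 : R).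
Proof.
move=> /andP[c0 c1]; case: (eqVneq c 0) => [->|cn0].
  apply: cvg_near_cst.
  near=> p; rewrite /= powR0 //; apply: lt0r_neq0.
  near: p; exists 0; split => // x h; lra.
have cp : 0 < c by rewrite lt0r cn0.
have lc : ln c < 0 by apply: ln_lt0; rewrite cp c1.
have e : forall p, c `^ (p + 1) = expR (- ((p + 1) * - ln c)).
  by move=> p; rewrite /powR (negbTE cn0) mulrN opprK.
have h1 : (fun p : R => (p + 1) * - ln c) @ +oo --> +oo.
  apply/cvgryPge => M; near=> p.
  rewrite -ler_pdivrMr; last lra.
  near: p; exists (M / - ln c); split => //; first by rewrite num_real.
  move=> x h; lra.
have := cvg_comp _ (fun x => expR (- x)) h1 (@cvgr_expR R).
by rewrite (funext e).
Unshelve. all: by end_near. Qed.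

Theorem lemma3p3 (R : realType) (n : nat) (V : R -> R) (G : R -> R -> R)
    (rbar R1 R2 c : R) (u : R -> R -> R) :
  (2 <= n)%N ->
  smooth_radial_profile V ->
  (forall r, 0 <= r < 1 -> 0 <= V r) ->
  (exists r, 0 <= r < 1 /\ V r != 0) ->
  neumann_green n V G ->
  0 < R1 -> R1 < rbar -> rbar < R2 -> R2 < 1 ->
  (* rbar is a local minimum point of F *)
  (exists d : R, 0 < d /\ forall r, 0 < r < 1 -> `|r - rbar| < d ->
     Ffun n G rbar <= Ffun n G r) ->
  (* rbar is a global minimum point of F on [R1, R2] *)
  (forall r, R1 <= r <= R2 -> Ffun n G rbar <= Ffun n G r) ->
  Num.max (G R1 rbar / G rbar rbar) (G R2 rbar / G rbar rbar) < c ->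
  c < 1 ->
  (forall p, 1 < p ->
     Kset n R1 R2 c p (u p) /\
     (forall r, 0 < r < 1 -> 0 <= u p r) /\
     Qform n V (u p) = Jval n V R1 R2 c p) ->
  gamma_p n R1 R2 p (u p) @[p --> +oo] --> (1 : R).
Proof.
move=> n2 _ _ _ _ R10 R1b bR2 R21 _ _ _ c1 hu.
have R12 : R1 < R2 by exact: lt_trans R1b bR2.
have c0 : 0 <= c.
  have h2 : (1 : R) < 2 by lra.
  have [[hH [hL hc]] [hpos _]] := hu 2 h2.
  by have [] := @key _ _ _ _ _ _ _ n2 R10 R12 R21 (lt_trans ltr01 h2) hH hL hc hpos.
have n0 : 0 < n%:R :> R by rewrite ltr0n; exact: ltnW.
set D := R2 ^+ n - R1 ^+ n.
have hD : 0 < D.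
  by rewrite subr_gt0 ltrXn2r //; [rewrite -lt0n; exact: ltnW | lra].
have eps0 : 0 < (2 * n%:R)^-1 :> R by rewrite invr_gt0 mulr_gt0.
have c01 : 0 <= c < 1 by rewrite c0 c1.
have hc := @cpow_lim R c c01.
move/cvgrPdist_lt : hc => /(_ _ eps0) hc.
apply: (@squeeze_cvgr _ _ _ _ (fun p => (2^-1 / D) `^ (p + 1)^-1)
                          (fun p => (D^-1) `^ (p + 1)^-1)); last first.
- by apply: (@powK_lim R); rewrite invr_gt0.
- by apply: (@powK_lim R); rewrite divr_gt0.
near=> p.
have hp : 1 < p by near: p; exists 1; split => // x.
have hcp : `|0 - c `^ (p + 1)| < (2 * n%:R)^-1 by near: p.
rewrite sub0r normrN ger0_norm ?powR_ge0 // in hcp.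
have [[hH [hL hc']] [hpos _]] := hu p hp.
have [_ [IA [-> /andP[lo hi]]]] :=
  @key _ _ _ _ _ _ _ n2 R10 R12 R21 (lt_trans ltr01 hp) hH hL hc' hpos.
have s0 : 0 <= (p + 1)^-1 by rewrite invr_ge0; lra.
have e : n%:R * n%:R^-1 = 1 :> R by rewrite mulfV // lt0r_neq0.
have e2 : n%:R * (2 * n%:R)^-1 = 2^-1 :> R.
  by rewrite invfM mulrCA mulfV ?mulr1 // lt0r_neq0.
have nIA1 : n%:R * IA <= 1 by nra.
have nIA2 : 2^-1 <= n%:R * IA by nra.
have hDi : 0 < D^-1 by rewrite invr_gt0.
apply/andP; split; apply: (@ge0_ler_powR R _ s0); rewrite ?nnegrE.
- by rewrite divr_ge0 //; lra.
- by rewrite divr_ge0 ?mulr_ge0 //; [lra | exact: ltW].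
- by rewrite ler_pM2r.
- by rewrite divr_ge0 ?mulr_ge0 //; [lra | exact: ltW].
- exact: ltW.
- by rewrite -[X in _ <= X]mul1r ler_pM2r.
Unshelve. all: by end_near. Qed.
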